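(* Consider the following posets $P$ with typings $t$ (each typing is surjective onto $\mathbb{N}$): (i) $\mathbb{N}$ under divisibility, with $t(n,m)=m/n$ for $n\mid m$; (ii) the finite subsets $\mathscr{F}(\mathbb{N})$ of $\mathbb{N}$ under inclusion, with $t(S,T)=|T|-|S|+1$ for $S\subseteq T$; (iii) the finite-dimensional subspaces $\mathscr{V}(\mathbb{F}_q^\infty)$ of $\mathbb{F}_q^\infty$ under inclusion, with $t(U,V)=\dim V-\dim U+1$ for $U\subseteq V$; (iv) $\mathbb{N}$ under the usual order $\leqslant$, with $t(n,m)=m-n+1$ for $n\leqslant m$. Then the posets (i), (ii), (iii) have the reduced Möbius uncertainty property $\mathcal{R}$, while the poset (iv) does not.
   Context: Let $P$ be a locally finite poset. A typing is a map $t:P\times P\to\mathbb{N}\cup\{0\}$ with $t(x,y)\neq0$ iff $x\leqslant y$, such that the convolution $(f_1*f_2)(x,y)=\sum_{x\leqslant z\leqslant y}f_1(x,z)f_2(z,y)$ of two functions whose values depend only on $t(x,y)$ again depends only on $t(x,y)$. For a surjective typing, let $\left[\begin{smallmatrix} n\\ d\ \ k\end{smallmatrix}\right]$ denote the number of $z$ in an interval $[x,y]$ of type $n$ with $[x,z]$ of type $d$ and $[z,y]$ of type $k$ (independent of the choice of interval). $(P,t)$ has property $\mathcal{R}$ if for all functions $f,g:\mathbb{N}\to\mathbb{C}$, neither identically zero, satisfying $g(n)=\sum_{d,k\in\mathbb{N}}\left[\begin{smallmatrix} n\\ d\ \ k\end{smallmatrix}\right] f(k)$ for all $n\in\mathbb{N}$,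 at least one of $\{n: f(n)\neq 0\}$ and $\{n:g(n)\neq0\}$ is infinite. Concretely, the relation $g=\zeta*f$ reads: in (i) $g(n)=\sum_{d\mid n}f(d)$; in (ii) $g(n)=\sum_{k=1}^n\binom{n-1}{k-1}f(k)$; in (iii) $g(n)=\sum_{k=1}^n\binom{n-1}{k-1}_q f(k)$ with the Gaussian binomial coefficient; in (iv) $g(n)=\sum_{k=1}^n f(k)$. *)

(* Defs.v *)
From HB Require Import structures.
From mathcomp Require Import all_boot all_order all_algebra.
From mathcomp Require Import complex.
From mathcomp Require Import Rstruct.
Set Implicit Arguments. Unset Strict Implicit. Unset Printing Implicit Defensive.
Import Order.TTheory GRing.Theory Num.Theory.

Notation C := (complex Rdefinitions.R).

(* Gaussian binomial coefficient [n choose k]_q, via the q-Pascal rule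
   [n+1, k+1]_q = [n, k]_q + q^(k+1) [n, k+1]_q. *)
Fixpoint qbinom (q n k : nat) : nat :=
  match n, k with
  | 0, 0 => 1
  | 0, _.+1 => 0
  | _.+1, 0 => 1
  | n'.+1, k'.+1 => qbinom q n' k' + q ^ k'.+1 * qbinom q n' k'.+1
  end.

(* Incidence coefficients [n; d k]: number of z in an interval [x,y] of type n
   with [x,z] of type d and [z,y] of type k, for each of the four typed posets. *)

(* (i) N under divisibility, t(n,m) = m/n: z = x*d with d*k = n. *)
Definition coef_div (n d k : nat) : nat := (d * k == n).

(* (ii) finite subsets of N under inclusion, t(S,T) = |T|-|S|+1. *)
Definition coef_sets (n d k : nat) : nat := (d + k == n.+1) * 'C(n.-1, d.-1).

(* (iii) finite-dim subspaces of F_q^oo, t(U,V) = dim V - dim U + 1. *)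
Definition coef_subspaces (q n d k : nat) : nat :=
  (d + k == n.+1) * qbinom q n.-1 d.-1.

(* (iv) N under <=, t(n,m) = m-n+1. *)
Definition coef_chain (n d k : nat) : nat := (d + k == n.+1).

(* The relation g = zeta * f: g(n) = sum_{d,k in N} [n; d k] f(k).  For these
   typings the coefficient vanishes unless 1 <= d, k <= n, so the sum is finite. *)
Definition zeta_rel (c : nat -> nat -> nat -> nat) (f g : nat -> C) : Prop :=
  forall n : nat, (0 < n)%N ->
    g n = (\sum_(1 <= d < n.+1) \sum_(1 <= k < n.+1) (c n d k)%:R * f k)%R.

Definition infinite_support (h : nat -> C) : Prop :=
  forall N : nat, exists n : nat, (N < n)%N /\ h n <> 0%R.

Definition nonzero_fun (h : nat -> C) : Prop :=
  exists n : nat, (0 < n)%N /\ h n <> 0%R.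

Definition propertyR (c : nat -> nat -> nat -> nat) : Prop :=
  forall f g : nat -> C, nonzero_fun f -> nonzero_fun g -> zeta_rel c f g ->
    infinite_support f \/ infinite_support g.

(* Main.v *)
Require Import Defs.
From mathcomp Require Import all_boot all_order all_algebra.
From mathcomp Require Import complex Rstruct zify ring.
From Stdlib Require Import Classical.
Import Order.TTheory GRing.Theory Num.Theory.
Local Open Scope ring_scope.

Lemma sum_reduce (w : nat -> nat -> nat) (f : nat -> C) n :
  (\sum_(1 <= d < n.+1) \sum_(1 <= k < n.+1) ((d + k == n.+1) * w n d)%:R * f k
  = \sum_(1 <= k < n.+1) (w n (n.+1 - k)%N)%:R * f k)%R.
Proof.
rewrite exchange_big /=; apply: eq_big_nat => k /andP[k1 kn].
rewrite (bigD1_seq (n.+1 - k)%N) /=; last exact: iota_uniq; last first.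
  rewrite mem_index_iota; apply/andP; split; lia.
rewrite big1 ?addr0.
  have -> : (n.+1 - k + k == n.+1)%N by apply/eqP; lia.
  by rewrite mul1n.
move=> d dn; have -> : (d + k == n.+1) = false.
  apply/negbTE/eqP => E; move/eqP: dn; apply; lia.
by rewrite mul0n mul0r.
Qed.

Lemma qb_gt q n k : (n < k)%N -> qbinom q n k = 0%N.
Proof.
elim: n k => [|n IH] [|k] //= H.
rewrite (IH k) ?(IH k.+1) //; lia.
Qed.

Lemma qb_diag q n : qbinom q n n = 1%N.
Proof. elim: n => [//|n IH] /=. by rewrite IH qb_gt ?muln0. Qed.

Lemma qb_0 q n : qbinom q n 0 = 1%N.
Proof. by case: n. Qed.

Lemma qb_1 n k : qbinom 1 n k = 'C(n, k).
Proof.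
elim: n k => [|n IH] [|k] //=.
by rewrite !IH exp1n mul1n binS addnC.
Qed.

Definition Z (q : nat) (f : nat -> C) (n : nat) : C :=
  \sum_(1 <= k < n.+1) (qbinom q n.-1 (n - k)%N)%:R * f k.

Definition T q m (f : nat -> C) k : C :=
  (q ^ (m.+2 - k) * qbinom q m (m.+2 - k))%N%:R * f k.

Lemma Zstep q f m :
  Z q f m.+2 - Z q f m.+1 =
  \sum_(1 <= j < m.+2) (q ^ (m.+1 - j))%N%:R * (qbinom q m (m.+1 - j))%:R * f j.+1.
Proof.
have -> : \sum_(1 <= j < m.+2) (q ^ (m.+1 - j))%N%:R * (qbinom q m (m.+1 - j))%:R * f j.+1
   = \sum_(2 <= j < m.+3) T q m f j.
  rewrite [RHS]big_add1 /=; apply: eq_big_nat => j _.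
  by rewrite /T subSS natrM.
have -> : Z q f m.+2 = \sum_(1 <= k < m.+2) (qbinom q m (m.+1 - k))%:R * f k
    + \sum_(1 <= k < m.+2) T q m f k + f m.+2.
  rewrite /Z big_nat_recr // -big_split; congr (_ + _).
    apply: eq_big_nat => k /andP[k1 km].
    have -> : (m.+2 - k = (m.+1 - k).+1)%N by lia.
    by rewrite /T /= natrD mulrDl -subSn.
  by rewrite subnn qb_0 mul1r.
have -> : Z q f m.+1 = \sum_(1 <= k < m.+2) (qbinom q m (m.+1 - k))%:R * f k by [].
rewrite addrAC [X in X + _]addrAC subrr add0r.
rewrite big_ltn // [in RHS]big_nat_recr //=.
rewrite /T subnn qb_0 expn0 muln1 mul1r.
have -> : (m.+2 - 1 = m.+1)%N by lia.
by rewrite qb_gt // muln0 mul0r add0r.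
Qed.

Lemma Zmain q (q0 : (0 < q)%N) M : forall f : nat -> C,
  (forall k, (M < k)%N -> f k = 0) ->
  forall N, (forall n, (N < n)%N -> Z q f n = 0) ->
  forall k, (0 < k)%N -> f k = 0.
Proof.
elim: M => [|M IH] f Hf N HN k k0; first exact: Hf.
have qn j : (q ^ j)%N%:R != 0 :> C by rewrite pnatr_eq0 -lt0n expn_gt0 q0.
pose f' j := f j.+1 / (q ^ j)%N%:R.
have Hf' : forall j, (M < j)%N -> f' j = 0 by move=> j Hj; rewrite /f' Hf ?mul0r.
have HN' : forall n, (N < n)%N -> Z q f' n = 0.
  move=> [|m] Hm; first by [].
  have := Zstep q f m; rewrite !HN; last lia; last lia.
  rewrite subrr => /esym E.
  suff: (q ^ m.+1)%N%:R * Z q f' m.+1 = 0.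
    by move/eqP; rewrite mulf_eq0 (negbTE (qn _)) /= => /eqP.
  rewrite -E /Z mulr_sumr; apply: eq_big_nat => j /andP[j1 jm] /=.
  have -> : (q ^ m.+1 = q ^ (m.+1 - j) * q ^ j)%N by rewrite -expnD subnK //; lia.
  rewrite natrM /f'; move: (qn j); set b := (q ^ j)%:R; move=> bn; field; exact: bn.
have Hf2 : forall j, (1 < j)%N -> f j = 0.
  move=> [|[|j]] // _.
  have := IH f' Hf' N HN' j.+1 isT.
  by rewrite /f' => /eqP; rewrite mulf_eq0 invr_eq0 (negbTE (qn _)) orbF => /eqP.
case: k k0 => [|[|k]] // _; last exact: Hf2.
have := HN N.+1 (ltnSn N).
rewrite /Z big_ltn // big_nat_cond big1 ?addr0.
  by rewrite /= subn1 /= qb_diag mul1r.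
by move=> i /andP[/andP[i2 _] _]; rewrite Hf2 ?mulr0.
Qed.

Lemma not_inf (h : nat -> C) : ~ infinite_support h -> exists N, forall n, (N < n)%N -> h n = 0.
Proof.
move=> H; apply: NNPP => H2; apply: H => N; apply: NNPP => H3; apply: H2.
exists N => n Nn; have [//|hn] := eqVneq (h n) 0.
by exfalso; apply: H3; exists n; split => //; apply/eqP.
Qed.

Lemma propR_sub q : (0 < q)%N -> propertyR (coef_subspaces q).
Proof.
move=> q0 f g [k [k0 fk]] _ Hz.
case: (classic (infinite_support f)) => [|Hf]; first by left.
case: (classic (infinite_support g)) => [|Hg]; first by right.
exfalso; apply: fk.
have [M HM] := not_inf _ Hf; have [N HN] := not_inf _ Hg.
apply: (@Zmain q q0 M f HM N) => // n Nn.
rewrite -(HN n Nn) (Hz n); last lia.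
rewrite /coef_subspaces (sum_reduce (fun n d => qbinom q n.-1 d.-1)) /Z.
apply: eq_big_nat => j /andP[j1 jn].
by have -> : ((n.+1 - j).-1 = n - j)%N by lia.
Qed.

Lemma propR_sets : propertyR coef_sets.
Proof.
move=> f g Hf Hg Hz; apply: (@propR_sub 1) => // n n0.
rewrite Hz //; apply: eq_bigr => d _; apply: eq_bigr => k _.
by rewrite /coef_sets /coef_subspaces qb_1.
Qed.

Lemma big2_single (r1 r2 : seq nat) (F : nat -> nat -> C) a b :
  uniq r1 -> uniq r2 -> a \in r1 -> b \in r2 ->
  (forall i j, i \in r1 -> j \in r2 -> (i != a) || (j != b) -> F i j = 0) ->
  \sum_(i <- r1) \sum_(j <- r2) F i j = F a b.
Proof.
move=> u1 u2 a1 b2 H.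
rewrite (bigD1_seq a) //= (bigD1_seq b) //=.
rewrite [X in _ + X + _]big1_seq ?addr0.
  rewrite big1_seq ?addr0 // => i /andP[ia ir]; apply: big1_seq => j /andP[_ jr].
  by apply: H => //; rewrite ia.
by move=> j /andP[jb jr]; apply: H => //; rewrite jb orbT.
Qed.

Lemma propR_div : propertyR coef_div.
Proof.
move=> f g [k1 [k10 fk1]] _ Hz.
case: (classic (infinite_support f)) => [|Hf]; first by left.
right; have [M HM] := not_inf _ Hf.
have exP : exists k, (0 < k)%N && (f k != 0) by exists k1; rewrite k10; apply/eqP.
case: (ex_minnP exP) => k0 /andP[k00 fk0] kmin.
move=> N; have [p Np pp] := prime_above (maxn N M).
have p0 := prime_gt0 pp.
move: Np; rewrite gtn_max => /andP[Np Mp].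
have k0M : (k0 <= M)%N.
  rewrite leqNgt; apply/negP => H; by move: fk0; rewrite HM ?eqxx.
exists (k0 * p)%N; split; first by apply: (leq_trans Np); rewrite leq_pmull.
have key : forall d k, (0 < k)%N -> f k != 0 -> (d * k == k0 * p)%N -> d = p /\ k = k0.
  move=> d k kpos fk /eqP E.
  have k0k : (k0 <= k)%N by apply: kmin; rewrite kpos fk.
  have kM : (k <= M)%N by rewrite leqNgt; apply/negP => H; by move: fk; rewrite HM ?eqxx.
  have : (p %| d * k)%N by rewrite E dvdn_mull.
  rewrite Euclid_dvdM // => /orP[/dvdnP[e De]|pk].
    subst d; move: E; rewrite mulnAC => /eqP; rewrite eqn_pmul2r // => /eqP E.
    have e1 : e = 1%N by case: e E => [|[|e]] E //; [rewrite -E in k00 | nia].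
    by subst e; split; lia.
  by have := dvdn_leq kpos pk; lia.
rewrite Hz; last by nia.
rewrite (@big2_single _ _ _ p k0); last first.
- move=> d k; rewrite !mem_index_iota => din kin dk.
  have [fk|fk] := eqVneq (f k) 0; first by rewrite fk mulr0.
  case E : (d * k == k0 * p)%N; last by rewrite /coef_div E mul0r.
  have [dp' kk] := key d k ltac:(lia) fk E.
  by move: dk; rewrite dp' kk !eqxx.
- by rewrite mem_index_iota; nia.
- by rewrite mem_index_iota; nia.
- exact: iota_uniq.
- exact: iota_uniq.
by rewrite /coef_div mulnC eqxx mul1r; apply/eqP.
Qed.

Lemma not_propR_chain : ~ propertyR coef_chain.
Proof.
move=> H.
pose f (n : nat) : C := if n == 1%N then 1 else if n == 2%N then -1 else 0.
pose g (n : nat) : C := if n == 1%N then 1 else 0.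
have nz1 : (1 : C) <> 0 by apply/eqP; exact: oner_neq0.
have Hnf : nonzero_fun f by exists 1%N; split => //; rewrite /f /=.
have Hng : nonzero_fun g by exists 1%N; split => //; rewrite /g /=.
have Hz : zeta_rel coef_chain f g.
  move=> n n0.
  rewrite (eq_bigr (fun d => \sum_(1 <= k < n.+1) ((d + k == n.+1) * 1)%:R * f k)); last first.
    by move=> d _; apply: eq_bigr => k _; rewrite /coef_chain muln1.
  have E := @sum_reduce (fun _ _ => 1%N) f n; rewrite /= in E; rewrite E {E}.
  case: n n0 => [|[|m]] // _.
    by rewrite big_nat1 mul1r.
  rewrite big_ltn // big_ltn // big_nat_cond big1 ?addr0.
    by rewrite !mul1r /f /g /= addrN.
  move=> i /andP[/andP[i3 _] _]; rewrite /f.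
  by case: i i3 => [|[|[|i]]] //= _; rewrite mulr0.
case: (H f g Hnf Hng Hz).
- move=> Hi; have [n [n2 fn]] := Hi 2%N; apply: fn; rewrite /f.
  by case: n n2 => [|[|[|n]]].
- move=> Hi; have [n [n2 fn]] := Hi 1%N; apply: fn; rewrite /g.
  by case: n n2 => [|[|n]].
Qed.

Theorem theorem1p8 :
  propertyR coef_div /\
  propertyR coef_sets /\
  (forall p e : nat, prime p -> (0 < e)%N -> propertyR (coef_subspaces (p ^ e))) /\
  ~ propertyR coef_chain.
Proof.
split; first exact: propR_div.
split; first exact: propR_sets.
split; last exact: not_propR_chain.
move=> p e pp _; apply: propR_sub.
by rewrite expn_gt0 prime_gt0.
Qed.
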